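(* Let $(A,\succ,\prec)$ be a finite-dimensional dendriform algebra with associated associative product $*$, and let $r\in A\otimes A$ be symmetric ($\sigma(r)=r$) and satisfy the $D$-equation $r_{12}*r_{13}=r_{13}\prec r_{23}+r_{23}\succ r_{12}$. Define $\Delta_\succ(x)=-(\mathrm{id}\otimes L(x)-R_\prec(x)\otimes\mathrm{id})r$ and $\Delta_\prec(x)=(\mathrm{id}\otimes L_\succ(x)-R(x)\otimes\mathrm{id})r$. Then the products $\langle a^*\succ_{A^*}b^*,x\rangle=\langle a^*\otimes b^*,\Delta_\succ(x)\rangle$, $\langle a^*\prec_{A^*}b^*,x\rangle=\langle a^*\otimes b^*,\Delta_\prec(x)\rangle$ define a dendriform algebra on $A^*$, and $(A,A^* )$ is a dendriform D-bialgebra.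
   Context: A dendriform algebra is a vector space with bilinear products $\prec,\succ$ such that, writing $x*y=x\prec y+x\succ y$: $(x\prec y)\prec z=x\prec(y*z)$, $(x\succ y)\prec z=x\succ(y\prec z)$, $x\succ(y\succ z)=(x*y)\succ z$. Notation: $L_\succ(x)y=x\succ y$, $R_\succ(x)y=y\succ x$, $L_\prec(x)y=x\prec y$, $R_\prec(x)y=y\prec x$, $L=L_\succ+L_\prec$, $R=R_\succ+R_\prec$; subscripts $A$, $A^*$ indicate the algebra. $\sigma(u\otimes v)=v\otimes u$. For $r=\sum_i x_i\otimes y_i$: $r_{12}*r_{13}=\sum_{i,j}x_i*x_j\otimes y_i\otimes y_j$, $r_{13}\prec r_{23}=\sum_{i,j}x_i\otimes x_j\otimes y_i\prec y_j$, $r_{23}\succ r_{12}=\sum_{i,j}x_j\otimes x_i\succ y_j\otimes y_i$. Dendriform D-bialgebra: given dendriform algebras $(A,\succ_A,\prec_A)$, $(A^*,\succ_{A^*},\prec_{A^*})$ with associated products $*_A,*_{A^*}$, let $\langle\beta_\succ(a^* ),x\otimes y\rangle=\langle a^*,x\succ_Ay\rangle$, $\langle\beta_\prec(a^* ),x\otimes y\rangle=\langle a^*,x\prec_Ay\rangle$, $\langle\Delta_\succ(x),a^*\otimes b^*\rangle=\langle x,a^*\succ_{A^*}b^*\rangle$, $\langle\Delta_\prec(x),a^*\otimes b^*\rangle=\langle x,a^*\prec_{A^*}b^*\rangle$. The pair $(A,A^* )$ is a dendriform D-bialgebra if for all $x,y\in A$, $a^*,b^*\in A^*$: (1) $\Delta_\prec(x*_Ay)=(\mathrm{id}\otimes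 L_{\succ_A}(x))\Delta_\prec(y)+(R_A(y)\otimes\mathrm{id})\Delta_\prec(x)$; (2) $\Delta_\succ(x*_Ay)=(\mathrm{id}\otimes L_A(x))\Delta_\succ(y)+(R_{\prec_A}(y)\otimes\mathrm{id})\Delta_\succ(x)$; (3) $\beta_\prec(a^**_{A^*}b^* )=(\mathrm{id}\otimes L_{\succ_{A^*}}(a^* ))\beta_\prec(b^* )+(R_{A^*}(b^* )\otimes\mathrm{id})\beta_\prec(a^* )$; (4) $\beta_\succ(a^**_{A^*}b^* )=(\mathrm{id}\otimes L_{A^*}(a^* ))\beta_\succ(b^* )+(R_{\prec_{A^*}}(b^* )\otimes\mathrm{id})\beta_\succ(a^* )$; (5) $(L_A(x)\otimes\mathrm{id}-\mathrm{id}\otimes R_{\prec_A}(x))\Delta_\prec(y)+\sigma[(L_{\succ_A}(y)\otimes\mathrm{id}-\mathrm{id}\otimes R_A(y))\Delta_\succ(x)]=0$; (6) $(L_{A^*}(a^* )\otimes\mathrm{id}-\mathrm{id}\otimes R_{\prec_{A^*}}(a^* ))\beta_\prec(b^* )+\sigma[(L_{\succ_{A^*}}(b^* )\otimes\mathrm{id}-\mathrm{id}\otimes R_{A^*}(b^* ))\beta_\succ(a^* )]=0$. *)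

(* Defs.v *)
(* Finite-dimensional algebras are represented in coordinates
   with respect to a basis e_0..e_{n-1} of A (and the dual basis of A^* ). *)
From HB Require Import structures.
From mathcomp Require Import all_boot all_order all_algebra.
Set Implicit Arguments. Unset Strict Implicit. Unset Printing Implicit Defensive.
Import GRing.Theory.
Local Open Scope ring_scope.

Section Dend.
Variables (K : fieldType) (n : nat).

(* elements of A (coordinates), of A (x) A, of A (x) A (x) A *)
Definition vec := 'I_n -> K.
Definition ten2 := 'I_n -> 'I_n -> K.
(* a bilinear product, via structure constants: e_i . e_j = sum_k c i j k e_k *)
Definition sconst := 'I_n -> 'I_n -> 'I_n -> K.

Definition bmul (c : sconst) (x y : vec) : vec :=
  fun k => \sum_(i < n) \sum_(j < n) x i * y j * c i j k.
Definition vadd (u v : vec) : vec := fun k => u k + v k.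
Definition basis_vec (k : 'I_n) : vec := fun l => if l == k then 1 else 0.

Definition star (s p : sconst) (x y : vec) : vec := vadd (bmul s x y) (bmul p x y).

(* (f (x) id) t and (id (x) f) t for a linear map f, and the flip sigma *)
Definition tl (f : vec -> vec) (t : ten2) : ten2 := fun i j => f (fun a => t a j) i.
Definition tr (f : vec -> vec) (t : ten2) : ten2 := fun i j => f (fun b => t i b) j.
Definition flip (t : ten2) : ten2 := fun i j => t j i.

(* (A, s = succ, p = prec) is a dendriform algebra *)
Definition dendriform (s p : sconst) : Prop :=
  forall x y z : vec, forall k,
    [/\ bmul p (bmul p x y) z k = bmul p x (star s p y z) k,
        bmul p (bmul s x y) z k = bmul s x (bmul p y z) k
      & bmul s x (bmul s y z) k = bmul s (star s p x y) z k].

(* comultiplication dual to a product c' on the dual space: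
   <Delta(x), a (x) b> = <x, a c' b>, i.e. Delta(x) i j = sum_k x_k c' i j k *)
Definition comult (c' : sconst) (x : vec) : ten2 :=
  fun i j => \sum_(k < n) x k * c' i j k.

(* conditions (1), (2), (5) for the pair ((s,p) on A, (s',p') on A^* ) *)
Definition bialg_half (s p s' p' : sconst) : Prop :=
  let Ds := comult s' in let Dp := comult p' in
  forall x y : vec, forall i j,
  [/\ Dp (star s p x y) i j
        = tr (bmul s x) (Dp y) i j + tl (fun v => star s p v y) (Dp x) i j,
      Ds (star s p x y) i j
        = tr (star s p x) (Ds y) i j + tl (fun v => bmul p v y) (Ds x) i j
    & (tl (star s p x) (Dp y) i j - tr (fun v => bmul p v x) (Dp y) i j)
      + flip (fun a b => tl (bmul s y) (Ds x) a b
                         - tr (fun v => star s p v y) (Ds x) a b) i j = 0].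

(* dendriform D-bialgebra (A, A^* ): conditions (1)-(6), both dendriform *)
Definition D_bialgebra (s p s' p' : sconst) : Prop :=
  [/\ dendriform s p, dendriform s' p', bialg_half s p s' p' & bialg_half s' p' s p].

Definition symmetric_tensor (r : ten2) : Prop := forall i j, r i j = r j i.

(* D-equation r12*r13 = r13 < r23 + r23 > r12, coordinatewise at (k,l,m) *)
Definition D_equation (s p : sconst) (r : ten2) : Prop :=
  forall k l m,
    star s p (fun a => r a l) (fun c => r c m) k
    = bmul p (fun b => r k b) (fun d => r l d) m
      + bmul s (fun a => r a m) (fun d => r k d) l.

(* Delta_succ(x) = -(id (x) L(x) - R_prec(x) (x) id) r *)
Definition Delta_succ (s p : sconst) (r : ten2) (x : vec) : ten2 :=
  fun i j => - (tr (star s p x) r i j - tl (fun v => bmul p v x) r i j).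
(* Delta_prec(x) = (id (x) L_succ(x) - R(x) (x) id) r *)
Definition Delta_prec (s p : sconst) (r : ten2) (x : vec) : ten2 :=
  fun i j => tr (bmul s x) r i j - tl (fun v => star s p v x) r i j.

(* structure constants of the induced products on A^* (dual basis):
   <e^i . e^j, e_k> = <e^i (x) e^j, Delta(e_k)> *)
Definition dual_succ (s p : sconst) (r : ten2) : sconst :=
  fun i j k => Delta_succ s p r (basis_vec k) i j.
Definition dual_prec (s p : sconst) (r : ten2) : sconst :=
  fun i j k => Delta_prec s p r (basis_vec k) i j.

End Dend.

(* Main.v *)
Require Import Defs.
From HB Require Import structures.
From mathcomp Require Import all_boot all_order all_algebra.
From Stdlib Require Import FunctionalExtensionality Ring_theory Ring.
Set Implicit Arguments. Unset Strict Implicit. Unset Printing Implicit Defensive.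
Import GRing.Theory.
Local Open Scope ring_scope.

Section Work.
Variables (K : fieldType) (n : nat).
Local Notation vec := (vec K n).
Local Notation e := (@basis_vec K n).

Local Notation KS := (GRing.PzSemiRing.sort K).
Definition kadd (x y : KS) : KS := x + y.
Definition kmul (x y : KS) : KS := x * y.
Definition kopp (x : KS) : KS := - x.
Definition ksub (x y : KS) : KS := x - y.
Definition kzero : KS := 0.
Definition kone : KS := 1.
Lemma KRT : @ring_theory KS kzero kone kadd kmul ksub kopp eq.
Proof.
split=> //=; rewrite /kadd /kmul /ksub /kopp /kzero /kone.
exact: add0r. exact: addrC. exact: addrA. exact: mul1r. exact: mulrC. exact: mulrA. exact: mulrDl. exact: subrr.
Qed.
Add Ring KR : KRT.
Lemma addE (x y : K) : x + y = kadd x y. Proof. by []. Qed.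
Lemma mulE (x y : K) : x * y = kmul x y. Proof. by []. Qed.
Lemma oppE (x : K) : - x = kopp x. Proof. by []. Qed.
Lemma zeroE : 0 = kzero :> K. Proof. by []. Qed.
Ltac kring := match goal with |- ?a = ?b => change (@eq KS a b) end;
  rewrite ?addE ?mulE ?oppE ?zeroE; ring.

Definition pair (u x : vec) : K := \sum_(c < n) u c * x c.
Definition Tm (r : ten2 K n) (u : vec) : vec := fun d => \sum_(c < n) u c * r c d.
Definition lin (f : vec -> vec) := forall v j, f v j = \sum_(b < n) v b * f (e b) j.
Definition tp (f : vec -> vec) (u : vec) : vec := fun b => pair u (f (e b)).

Lemma sum_delta_l k (F : 'I_n -> K) : \sum_(l < n) e k l * F l = F k.
Proof.
rewrite (bigD1 k) //= /basis_vec eqxx mul1r big1 ?addr0 // => l /negbTE ->.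
by rewrite mul0r.
Qed.

Lemma sum_delta_r k (F : 'I_n -> K) : \sum_(l < n) F l * e k l = F k.
Proof. rewrite -[RHS](sum_delta_l k); apply: eq_bigr => l _; exact: mulrC. Qed.

Lemma pair_e_r u k : pair u (e k) = u k.
Proof. exact: sum_delta_r. Qed.
Lemma pair_e_l u k : pair (e k) u = u k.
Proof. exact: sum_delta_l. Qed.

Lemma bmul_e_l c i (y : vec) k : bmul c (e i) y k = \sum_(b < n) y b * c i b k.
Proof.
rewrite /bmul (eq_bigr (fun a => e i a * \sum_(b < n) y b * c a b k)).
  by rewrite sum_delta_l.
by move=> a _; rewrite mulr_sumr; apply: eq_bigr => b _; rewrite mulrA.
Qed.

Lemma bmul_e_r c (x : vec) j k : bmul c x (e j) k = \sum_(a < n) x a * c a j k.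
Proof.
rewrite /bmul; apply: eq_bigr => a _.
rewrite (eq_bigr (fun b => e j b * (x a * c a b k))) ?sum_delta_l //.
by move=> b _; rewrite mulrAC mulrC mulrA.
Qed.

Lemma bmul_ee c i j k : bmul c (e i) (e j) k = c i j k.
Proof. by rewrite bmul_e_l sum_delta_l. Qed.

Lemma lin_bmul_r c x : lin (bmul c x).
Proof.
move=> v j; rewrite /bmul exchange_big /=; apply: eq_bigr => b _.
rewrite mulr_sumr; apply: eq_bigr => a _.
rewrite (eq_bigr (fun b' => e b b' * (x a * c a b' j))) ?sum_delta_l.
  by rewrite mulrCA mulrA.
by move=> b' _; rewrite mulrAC mulrC mulrA.
Qed.

Lemma lin_bmul_l c y : lin (fun v => bmul c v y).
Proof.
move=> v j /=; rewrite /bmul; apply: eq_bigr => a _.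
rewrite -/(bmul c (e a) y j) bmul_e_l mulr_sumr; apply: eq_bigr => b _; by rewrite mulrA.
Qed.



Lemma lin_star_r s p x : lin (star s p x).
Proof.
move=> v j; rewrite /star /vadd lin_bmul_r (lin_bmul_r p x) -big_split /=.
by apply: eq_bigr => b _; rewrite mulrDr.
Qed.

Lemma lin_star_l s p y : lin (fun v => star s p v y).
Proof.
move=> v j /=; rewrite /star /vadd (lin_bmul_l s y) (lin_bmul_l p y) -big_split /=.
by apply: eq_bigr => b _; rewrite mulrDr.
Qed.

Lemma lin_sum f (w : 'I_n -> K) (g : 'I_n -> vec) j : lin f ->
  f (fun a => \sum_(i < n) w i * g i a) j = \sum_(i < n) w i * f (g i) j.
Proof.
move=> H; rewrite H; under eq_bigr do rewrite mulr_suml.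
rewrite exchange_big /=; apply: eq_bigr => i _; rewrite (H (g i)) mulr_sumr.
by apply: eq_bigr => b _; rewrite mulrA.
Qed.

Lemma lin_addv f (u v : vec) j : lin f -> f (fun a => u a + v a) j = f u j + f v j.
Proof.
move=> H; rewrite H (H u) (H v) -big_split /=; apply: eq_bigr => b _; exact: mulrDl.
Qed.

Lemma lin_oppv f (u : vec) j : lin f -> f (fun a => - u a) j = - f u j.
Proof.
move=> H; rewrite H (H u) -sumrN /=; apply: eq_bigr => b _; exact: mulNr.
Qed.

Lemma lin_subv f (u v : vec) j : lin f -> f (fun a => u a - v a) j = f u j - f v j.
Proof.
move=> H; rewrite (lin_addv _ _ _ H) -(lin_oppv _ _ H); congr (_ + _).
Qed.

Lemma pair_lin f u z : lin f -> pair u (f z) = pair (tp f u) z.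
Proof.
move=> H; rewrite /pair /tp /pair.
under eq_bigr do rewrite H mulr_sumr.
rewrite exchange_big /=; apply: eq_bigr => b _; rewrite mulr_suml.
by apply: eq_bigr => c _; rewrite mulrCA mulrC.
Qed.

Lemma pair_addr u (x y : vec) : pair u (fun a => x a + y a) = pair u x + pair u y.
Proof. by rewrite /pair -big_split; apply: eq_bigr => c _; rewrite mulrDr. Qed.
Lemma pair_oppr u (x : vec) : pair u (fun a => - x a) = - pair u x.
Proof. by rewrite /pair -sumrN; apply: eq_bigr => c _; rewrite mulrN. Qed.
Lemma pair_subr u (x y : vec) : pair u (fun a => x a - y a) = pair u x - pair u y.
Proof. by rewrite pair_addr pair_oppr. Qed.
Lemma pair_addl u (x y : vec) : pair (fun a => x a + y a) u = pair x u + pair y u.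
Proof. by rewrite /pair -big_split; apply: eq_bigr => c _; rewrite mulrDl. Qed.
Lemma pair_vadd u (x y : vec) : pair (vadd x y) u = pair x u + pair y u.
Proof. exact: pair_addl. Qed.
Lemma pair_vaddr u (x y : vec) : pair u (vadd x y) = pair u x + pair u y.
Proof. exact: pair_addr. Qed.
Lemma pair_suml (w : 'I_n -> K) (F : 'I_n -> vec) y :
  pair (fun k => \sum_(i < n) w i * F i k) y = \sum_(i < n) w i * pair (F i) y.
Proof.
rewrite /pair; under eq_bigr do rewrite mulr_suml.
rewrite exchange_big /=; apply: eq_bigr => i _; rewrite mulr_sumr.
by apply: eq_bigr => c _; rewrite mulrA.
Qed.
Lemma pair_sumr (w : 'I_n -> K) (F : 'I_n -> vec) y :
  pair y (fun k => \sum_(i < n) w i * F i k) = \sum_(i < n) w i * pair y (F i).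
Proof.
rewrite /pair; under eq_bigr do rewrite mulr_sumr.
rewrite exchange_big /=; apply: eq_bigr => i _; rewrite mulr_sumr.
by apply: eq_bigr => c _; rewrite mulrCA.
Qed.

Lemma pair_bmul c u v x :
  pair (bmul c u v) x = \sum_(i < n) \sum_(j < n) u i * v j * comult c x i j.
Proof.
rewrite /pair /bmul /comult; under eq_bigr do rewrite mulr_suml.
rewrite exchange_big /=; apply: eq_bigr => i _.
under eq_bigr do rewrite mulr_suml.
rewrite exchange_big /=; apply: eq_bigr => j _.
rewrite mulr_sumr; apply: eq_bigr => k _; by rewrite mulrCA mulrC.
Qed.

Lemma Tm_sym r a b : symmetric_tensor r -> pair a (Tm r b) = pair b (Tm r a).
Proof.
move=> Hr; rewrite /pair /Tm; under eq_bigr do rewrite mulr_sumr.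
rewrite exchange_big /=; apply: eq_bigr => c _; rewrite mulr_sumr.
by apply: eq_bigr => d _; rewrite (Hr d c) mulrCA.
Qed.


Lemma dsum_uv (u v : vec) (A : 'I_n -> 'I_n -> K) :
  \sum_(i < n) \sum_(j < n) u i * v j * A i j = \sum_(i < n) u i * \sum_(j < n) v j * A i j.
Proof. by apply: eq_bigr => i _; rewrite mulr_sumr; apply: eq_bigr => j _; rewrite mulrA. Qed.
Lemma dsum_vu (u v : vec) (A : 'I_n -> 'I_n -> K) :
  \sum_(i < n) \sum_(j < n) u i * v j * A i j = \sum_(j < n) v j * \sum_(i < n) u i * A i j.
Proof.
rewrite exchange_big /=; apply: eq_bigr => j _; rewrite mulr_sumr.
by apply: eq_bigr => i _; rewrite mulrCA mulrA.
Qed.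
Lemma dsum_sub (u v : vec) (A B : 'I_n -> 'I_n -> K) :
  \sum_(i < n) \sum_(j < n) u i * v j * (A i j - B i j)
  = \sum_(i < n) \sum_(j < n) u i * v j * A i j - \sum_(i < n) \sum_(j < n) u i * v j * B i j.
Proof.
rewrite -sumrB; apply: eq_bigr => i _; rewrite -sumrB.
by apply: eq_bigr => j _; rewrite mulrBr.
Qed.

Lemma bmul_lin_l c (x y : vec) k : bmul c x y k = \sum_(b < n) x b * bmul c (e b) y k.
Proof. exact: (lin_bmul_l c y x k). Qed.
Lemma bmul_lin_r c (x y : vec) k : bmul c x y k = \sum_(b < n) y b * bmul c x (e b) k.
Proof. exact: (lin_bmul_r c x y k). Qed.
Lemma star_lin_l s p (x y : vec) k : star s p x y k = \sum_(b < n) x b * star s p (e b) y k.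
Proof. exact: (lin_star_l s p y x k). Qed.
Lemma star_lin_r s p (x y : vec) k : star s p x y k = \sum_(b < n) y b * star s p x (e b) k.
Proof. exact: (lin_star_r s p x y k). Qed.

Lemma bmul_suml c (w : 'I_n -> K) (g : 'I_n -> vec) y k :
  bmul c (fun a => \sum_(i < n) w i * g i a) y k = \sum_(i < n) w i * bmul c (g i) y k.
Proof. exact: (@lin_sum (fun v => bmul c v y) w g k (lin_bmul_l c y)). Qed.
Lemma bmul_sumr c (w : 'I_n -> K) (g : 'I_n -> vec) x k :
  bmul c x (fun a => \sum_(i < n) w i * g i a) k = \sum_(i < n) w i * bmul c x (g i) k.
Proof. exact: (@lin_sum (bmul c x) w g k (lin_bmul_r c x)). Qed.
Lemma star_suml s p (w : 'I_n -> K) (g : 'I_n -> vec) y k :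
  star s p (fun a => \sum_(i < n) w i * g i a) y k = \sum_(i < n) w i * star s p (g i) y k.
Proof. exact: (@lin_sum (fun v => star s p v y) w g k (lin_star_l s p y)). Qed.
Lemma star_sumr s p (w : 'I_n -> K) (g : 'I_n -> vec) x k :
  star s p x (fun a => \sum_(i < n) w i * g i a) k = \sum_(i < n) w i * star s p x (g i) k.
Proof. exact: (@lin_sum (star s p x) w g k (lin_star_r s p x)). Qed.

Lemma bmul_sumlF c (w : 'I_n -> K) (g : 'I_n -> vec) y :
  bmul c (fun a => \sum_(i < n) w i * g i a) y = fun k => \sum_(i < n) w i * bmul c (g i) y k.
Proof. apply: functional_extensionality => k; exact: bmul_suml. Qed.
Lemma bmul_sumrF c (w : 'I_n -> K) (g : 'I_n -> vec) x :
  bmul c x (fun a => \sum_(i < n) w i * g i a) = fun k => \sum_(i < n) w i * bmul c x (g i) k.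
Proof. apply: functional_extensionality => k; exact: bmul_sumr. Qed.
Lemma star_sumlF s p (w : 'I_n -> K) (g : 'I_n -> vec) y :
  star s p (fun a => \sum_(i < n) w i * g i a) y = fun k => \sum_(i < n) w i * star s p (g i) y k.
Proof. apply: functional_extensionality => k; exact: star_suml. Qed.
Lemma star_sumrF s p (w : 'I_n -> K) (g : 'I_n -> vec) x :
  star s p x (fun a => \sum_(i < n) w i * g i a) = fun k => \sum_(i < n) w i * star s p x (g i) k.
Proof. apply: functional_extensionality => k; exact: star_sumr. Qed.

Definition col (r : ten2 K n) j : vec := fun a => r a j.
Definition row (r : ten2 K n) i : vec := fun b => r i b.

Lemma row_col r i : symmetric_tensor r -> row r i = col r i.
Proof. by move=> Hr; apply: functional_extensionality => b; rewrite /row /col Hr. Qed.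

Lemma Tm_row r u : Tm r u = fun d => \sum_(c < n) u c * row r c d.
Proof. by []. Qed.
Lemma Tm_col r u : symmetric_tensor r -> Tm r u = fun d => \sum_(c < n) u c * col r c d.
Proof.
move=> Hr; apply: functional_extensionality => d; rewrite /Tm.
by apply: eq_bigr => c _; rewrite /col Hr.
Qed.

Lemma comult_S (s p : sconst K n) (r : ten2 K n) (x : vec) i j :
  comult (dual_succ s p r) x i j = Delta_succ s p r x i j.
Proof.
rewrite /comult /dual_succ /Delta_succ /tr /tl.
rewrite (star_lin_l s p x) (bmul_lin_r p _ x) -sumrB -sumrN.
by apply: eq_bigr => k _; rewrite mulrN mulrBr.
Qed.

Lemma comult_P (s p : sconst K n) (r : ten2 K n) (x : vec) i j :
  comult (dual_prec s p r) x i j = Delta_prec s p r x i j.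
Proof.
rewrite /comult /dual_prec /Delta_prec /tr /tl.
rewrite (bmul_lin_l s x) (star_lin_r s p _ x) -sumrB.
by apply: eq_bigr => k _; rewrite mulrBr.
Qed.

Lemma C1s (s p : sconst K n) (r : ten2 K n) (u v x : vec) : symmetric_tensor r ->
  pair (bmul (dual_succ s p r) u v) x
  = pair u (bmul p (Tm r v) x) - pair v (star s p x (Tm r u)).
Proof.
move=> Hr; rewrite pair_bmul.
under eq_bigr do under eq_bigr do rewrite comult_S /Delta_succ /tr /tl opprB.
rewrite dsum_sub dsum_uv dsum_vu /pair; congr (_ - _).
  apply: eq_bigr => i _; congr (_ * _); rewrite (Tm_col v Hr) bmul_suml.
  by [].
apply: eq_bigr => j _; congr (_ * _); rewrite Tm_row star_sumr.
by [].
Qed.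


Lemma C1p (s p : sconst K n) (r : ten2 K n) (u v x : vec) : symmetric_tensor r ->
  pair (bmul (dual_prec s p r) u v) x
  = pair v (bmul s x (Tm r u)) - pair u (star s p (Tm r v) x).
Proof.
move=> Hr; rewrite pair_bmul.
under eq_bigr do under eq_bigr do rewrite comult_P /Delta_prec /tr /tl.
rewrite dsum_sub dsum_vu dsum_uv /pair; congr (_ - _).
  apply: eq_bigr => j _; congr (_ * _); rewrite Tm_row bmul_sumr.
  by [].
apply: eq_bigr => i _; congr (_ * _); rewrite (Tm_col v Hr) star_suml.
by [].
Qed.

Lemma C1m (s p : sconst K n) (r : ten2 K n) (u v x : vec) : symmetric_tensor r ->
  pair (star (dual_succ s p r) (dual_prec s p r) u v) x
  = - pair u (bmul s (Tm r v) x) - pair v (bmul p x (Tm r u)).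
Proof.
move=> Hr; rewrite /star pair_vadd C1s // C1p //.
rewrite /star !pair_vaddr; kring.
Qed.

Lemma DEc (s p : sconst K n) (r : ten2 K n) : symmetric_tensor r -> D_equation s p r ->
  forall j d i, star s p (col r d) (col r i) j
    = bmul p (col r j) (col r d) i + bmul s (col r i) (col r j) d.
Proof.
move=> Hr HD j d i; have := HD j d i.
by rewrite -/(row r j) -/(row r d) !row_col.
Qed.

Lemma C2s (s p : sconst K n) (r : ten2 K n) (u v : vec) :
  symmetric_tensor r -> D_equation s p r ->
  Tm r (bmul (dual_succ s p r) u v) = fun d => - bmul s (Tm r u) (Tm r v) d.
Proof.
move=> Hr HD; apply: functional_extensionality => d.
change (pair (bmul (dual_succ s p r) u v) (col r d) = - bmul s (Tm r u) (Tm r v) d).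
rewrite C1s // !(Tm_col _ Hr) bmul_sumlF star_sumrF bmul_suml pair_sumr pair_sumr.
under [in RHS]eq_bigr do rewrite bmul_sumr.
rewrite /pair -[X in X - _ = _]dsum_vu -[X in _ - X = _]dsum_uv -[X in _ = - X]dsum_uv.
rewrite -dsum_sub -sumrN; apply: eq_bigr => i _.
rewrite -sumrN; apply: eq_bigr => j _.
rewrite (DEc Hr HD). kring.
Qed.


Lemma C2p (s p : sconst K n) (r : ten2 K n) (u v : vec) :
  symmetric_tensor r -> D_equation s p r ->
  Tm r (bmul (dual_prec s p r) u v) = fun d => - bmul p (Tm r u) (Tm r v) d.
Proof.
move=> Hr HD; apply: functional_extensionality => d.
change (pair (bmul (dual_prec s p r) u v) (col r d) = - bmul p (Tm r u) (Tm r v) d).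
rewrite C1p // !(Tm_col _ Hr) bmul_sumrF star_sumlF bmul_suml pair_sumr pair_sumr.
under [in RHS]eq_bigr do rewrite bmul_sumr.
rewrite /pair -[X in X - _ = _]dsum_uv -[X in _ - X = _]dsum_vu -[X in _ = - X]dsum_uv.
rewrite -dsum_sub -sumrN; apply: eq_bigr => i _.
rewrite -sumrN; apply: eq_bigr => j _.
rewrite (DEc Hr HD). kring.
Qed.

Lemma Tm_vadd (r : ten2 K n) (a b : vec) : Tm r (vadd a b) = fun d => Tm r a d + Tm r b d.
Proof. by apply: functional_extensionality => d; exact: pair_addl. Qed.

Lemma C2m (s p : sconst K n) (r : ten2 K n) (u v : vec) :
  symmetric_tensor r -> D_equation s p r ->
  Tm r (star (dual_succ s p r) (dual_prec s p r) u v) = fun d => - star s p (Tm r u) (Tm r v) d.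
Proof.
move=> Hr HD; rewrite /star Tm_vadd C2s // C2p //.
apply: functional_extensionality => d; rewrite /vadd; kring.
Qed.

Section Dend.
Variables (s p : sconst K n).
Hypothesis HA : dendriform s p.

Lemma D1f x y z : bmul p (bmul p x y) z = bmul p x (star s p y z).
Proof. by apply: functional_extensionality => k; case: (HA x y z k). Qed.
Lemma D2f x y z : bmul p (bmul s x y) z = bmul s x (bmul p y z).
Proof. by apply: functional_extensionality => k; case: (HA x y z k). Qed.
Lemma D3f x y z : bmul s x (bmul s y z) = bmul s (star s p x y) z.
Proof. by apply: functional_extensionality => k; case: (HA x y z k). Qed.

Lemma bmul_addl c (a b y : vec) k : bmul c (fun i => a i + b i) y k = bmul c a y k + bmul c b y k.
Proof. exact: (@lin_addv (fun v => bmul c v y) a b k (lin_bmul_l c y)). Qed.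
Lemma bmul_addr c (a b x : vec) k : bmul c x (fun i => a i + b i) k = bmul c x a k + bmul c x b k.
Proof. exact: (@lin_addv (bmul c x) a b k (lin_bmul_r c x)). Qed.

Lemma Af x y z : star s p (star s p x y) z = star s p x (star s p y z).
Proof.
apply: functional_extensionality => k.
have E1 : bmul p (bmul p x y) z k = bmul p x (bmul s y z) k + bmul p x (bmul p y z) k.
  by rewrite D1f /star /vadd bmul_addr.
have E3 : bmul s x (bmul s y z) k = bmul s (bmul s x y) z k + bmul s (bmul p x y) z k.
  by rewrite D3f /star /vadd bmul_addl.
rewrite /star /vadd !bmul_addl !bmul_addr E1 E3 D2f; kring.
Qed.

End Dend.


Lemma pair_ext (A B : vec) : (forall X, pair A X = pair B X) -> forall k, A k = B k.
Proof. by move=> H k; rewrite -!pair_e_r. Qed.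

Lemma bmul_oppl c (F y : vec) : bmul c (fun d => - F d) y = fun k => - bmul c F y k.
Proof. apply: functional_extensionality => k; exact: (@lin_oppv (fun v => bmul c v y) F k (lin_bmul_l c y)). Qed.
Lemma bmul_oppr c (F x : vec) : bmul c x (fun d => - F d) = fun k => - bmul c x F k.
Proof. apply: functional_extensionality => k; exact: (@lin_oppv (bmul c x) F k (lin_bmul_r c x)). Qed.
Lemma star_oppl s p (F y : vec) : star s p (fun d => - F d) y = fun k => - star s p F y k.
Proof. apply: functional_extensionality => k; exact: (@lin_oppv (fun v => star s p v y) F k (lin_star_l s p y)). Qed.
Lemma star_oppr s p (F x : vec) : star s p x (fun d => - F d) = fun k => - star s p x F k.
Proof. apply: functional_extensionality => k; exact: (@lin_oppv (star s p x) F k (lin_star_r s p x)). Qed.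

Lemma dual_dend (s p : sconst K n) (r : ten2 K n) :
  dendriform s p -> symmetric_tensor r -> D_equation s p r ->
  dendriform (dual_succ s p r) (dual_prec s p r).
Proof.
move=> HA Hr HD.
have c1s (u v x : vec) := @C1s s p r u v x Hr.
have c1p (u v x : vec) := @C1p s p r u v x Hr.
have c1m (u v x : vec) := @C1m s p r u v x Hr.
have c2s (u v : vec) := @C2s s p r u v Hr HD.
have c2p (u v : vec) := @C2p s p r u v Hr HD.
have c2m (u v : vec) := @C2m s p r u v Hr HD.
move=> u v w k; split; apply: pair_ext => X;
  do 2 rewrite ?c1p ?c1s ?c2p ?c2s ?c2m ?c1m ?bmul_oppr ?bmul_oppl ?star_oppl ?star_oppr ?pair_oppr.
- rewrite (D2f HA) (D3f HA) (Af HA); kring.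
- rewrite (D3f HA) (D1f HA) (Af HA); kring.
- rewrite (D2f HA) (D1f HA) (Af HA); kring.
Qed.


Lemma dsum_delta_l i (W : vec) (F : 'I_n -> 'I_n -> K) :
  \sum_(a < n) \sum_(b < n) e i a * W b * F a b = \sum_(b < n) W b * F i b.
Proof.
rewrite (eq_bigr (fun a => e i a * \sum_(b < n) W b * F a b)) ?sum_delta_l //.
by move=> a _; rewrite mulr_sumr; apply: eq_bigr => b _; rewrite mulrA.
Qed.
Lemma dsum_delta_r j (W : vec) (F : 'I_n -> 'I_n -> K) :
  \sum_(a < n) \sum_(b < n) W a * e j b * F a b = \sum_(a < n) W a * F a j.
Proof.
apply: eq_bigr => a _.
rewrite (eq_bigr (fun b => e j b * (W a * F a b))) ?sum_delta_l //.
by move=> b _; rewrite mulrAC mulrC mulrA.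
Qed.

Lemma comult_pair c x i j : comult c x i j = pair (bmul c (e i) (e j)) x.
Proof. by rewrite pair_bmul dsum_delta_l sum_delta_l. Qed.

Lemma comultA c v i j : comult c v i j = pair v (bmul c (e i) (e j)).
Proof. by rewrite /comult /pair; apply: eq_bigr => k _; rewrite bmul_ee. Qed.

Lemma GL1 c f x i j : lin f -> f (fun b => comult c x i b) j = pair (bmul c (e i) (tp f (e j))) x.
Proof.
move=> H; rewrite H pair_bmul dsum_delta_l; apply: eq_bigr => b _.
by rewrite /tp pair_e_l mulrC.
Qed.
Lemma GL2 c f x i j : lin f -> f (fun a => comult c x a j) i = pair (bmul c (tp f (e i)) (e j)) x.
Proof.
move=> H; rewrite H pair_bmul dsum_delta_r; apply: eq_bigr => b _.
by rewrite /tp pair_e_l mulrC.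
Qed.

Lemma halfA (s p : sconst K n) (r : ten2 K n) :
  dendriform s p -> symmetric_tensor r -> D_equation s p r ->
  bialg_half s p (dual_succ s p r) (dual_prec s p r).
Proof.
move=> HA Hr HD.
have c1s (u v x : vec) := @C1s s p r u v x Hr.
have c1p (u v x : vec) := @C1p s p r u v x Hr.
rewrite /bialg_half /= => x y i j; split.
- rewrite /tr /tl comult_pair (GL1 _ _ _ _ (lin_bmul_r s x)) (GL2 _ _ _ _ (lin_star_l s p y)).
  set W := tp (bmul s x) (e j); set Z := tp (fun v => star s p v y) (e i).
  have cross : pair (e i) (star s p (Tm r W) y) = pair (e j) (bmul s x (Tm r Z)).
    by rewrite (pair_lin _ _ (lin_star_l s p y)) Tm_sym // -(pair_lin _ _ (lin_bmul_r s x)).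
  rewrite !c1p -(pair_lin _ _ (lin_bmul_r s x)) -(pair_lin _ _ (lin_star_l s p y)) cross.
  rewrite (D3f HA) (Af HA); kring.
- rewrite /tr /tl comult_pair (GL1 _ _ _ _ (lin_star_r s p x)) (GL2 _ _ _ _ (lin_bmul_l p y)).
  set W := tp (star s p x) (e j); set Z := tp (fun v => bmul p v y) (e i).
  have cross : pair (e i) (bmul p (Tm r W) y) = pair (e j) (star s p x (Tm r Z)).
    by rewrite (pair_lin _ _ (lin_bmul_l p y)) Tm_sym // -(pair_lin _ _ (lin_star_r s p x)).
  rewrite !c1s -(pair_lin _ _ (lin_star_r s p x)) -(pair_lin _ _ (lin_bmul_l p y)) cross.
  rewrite (D1f HA) (Af HA); kring.
- rewrite /flip /tr /tl /=.
  rewrite (GL2 _ _ _ _ (lin_star_r s p x)) (GL1 _ _ _ _ (lin_bmul_l p x)).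
  rewrite (GL2 _ _ _ _ (lin_bmul_r s y)) (GL1 _ _ _ _ (lin_star_l s p y)).
  set Z1 := tp (star s p x) (e i); set W2 := tp (fun v => bmul p v x) (e j).
  set Z3 := tp (bmul s y) (e j); set W4 := tp (fun v => star s p v y) (e i).
  have cross1 : pair (e j) (bmul s y (Tm r Z1)) = pair (e i) (star s p x (Tm r Z3)).
    by rewrite (pair_lin _ _ (lin_bmul_r s y)) Tm_sym // -(pair_lin _ _ (lin_star_r s p x)).
  have cross2 : pair (e i) (star s p (Tm r W2) y) = pair (e j) (bmul p (Tm r W4) x).
    by rewrite (pair_lin _ _ (lin_star_l s p y)) Tm_sym // -(pair_lin _ _ (lin_bmul_l p x)).
  rewrite !c1p !c1s -(pair_lin _ _ (lin_star_r s p x)) -(pair_lin _ _ (lin_bmul_l p x)).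
  rewrite -(pair_lin _ _ (lin_bmul_r s y)) -(pair_lin _ _ (lin_star_l s p y)) cross1 cross2.
  rewrite (D2f HA) (Af HA); kring.
Qed.


Lemma tpA1 c (v : vec) i : (fun b => comult c v i b) = tp (bmul c (e i)) v.
Proof. by apply: functional_extensionality => b; rewrite comultA. Qed.
Lemma tpA2 c (v : vec) j : (fun a => comult c v a j) = tp (fun w => bmul c w (e j)) v.
Proof. by apply: functional_extensionality => b; rewrite comultA. Qed.
Lemma bmulE c (u v : vec) j : bmul c u v j = pair (bmul c u v) (e j).
Proof. by rewrite pair_e_r. Qed.
Lemma starE s p (u v : vec) j : star s p u v j = pair (star s p u v) (e j).
Proof. by rewrite pair_e_r. Qed.

Lemma halfB (s p : sconst K n) (r : ten2 K n) :
  dendriform s p -> symmetric_tensor r -> D_equation s p r ->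
  bialg_half (dual_succ s p r) (dual_prec s p r) s p.
Proof.
move=> HA Hr HD.
have c1s (u v x : vec) := @C1s s p r u v x Hr.
have c1p (u v x : vec) := @C1p s p r u v x Hr.
have c1m (u v x : vec) := @C1m s p r u v x Hr.
rewrite /bialg_half /= => u v i j; split.
- rewrite /tr /tl comultA tpA1 tpA2 bmulE starE.
  set V := tp (bmul p (e i)) v; set U := tp (fun w => bmul p w (e j)) u.
  have cross : pair u (bmul p (Tm r V) (e j)) = pair v (bmul p (e i) (Tm r U)).
    by rewrite (pair_lin _ _ (lin_bmul_l p (e j))) Tm_sym // -(pair_lin _ _ (lin_bmul_r p (e i))).
  rewrite !c1m c1s -(pair_lin _ _ (lin_bmul_r p (e i))) -(pair_lin _ _ (lin_bmul_l p (e j))) cross.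
  rewrite (D2f HA) (D1f HA); kring.
- rewrite /tr /tl comultA tpA1 tpA2 starE bmulE.
  set V := tp (bmul s (e i)) v; set U := tp (fun w => bmul s w (e j)) u.
  have cross : pair u (bmul s (Tm r V) (e j)) = pair v (bmul s (e i) (Tm r U)).
    by rewrite (pair_lin _ _ (lin_bmul_l s (e j))) Tm_sym // -(pair_lin _ _ (lin_bmul_r s (e i))).
  rewrite !c1m c1p -(pair_lin _ _ (lin_bmul_r s (e i))) -(pair_lin _ _ (lin_bmul_l s (e j))) cross.
  rewrite (D3f HA) (D2f HA); kring.
- rewrite /flip /tr /tl /= !tpA1 !tpA2 !starE !bmulE.
  set V1 := tp (fun w => bmul p w (e j)) v; set V2 := tp (bmul p (e i)) v.
  set U3 := tp (fun w => bmul s w (e i)) u; set U4 := tp (bmul s (e j)) u.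
  have cross1 : pair u (bmul s (Tm r V1) (e i)) = pair v (bmul p (Tm r U3) (e j)).
    by rewrite (pair_lin _ _ (lin_bmul_l s (e i))) Tm_sym // -(pair_lin _ _ (lin_bmul_l p (e j))).
  have cross2 : pair u (bmul s (e j) (Tm r V2)) = pair v (bmul p (e i) (Tm r U4)).
    by rewrite (pair_lin _ _ (lin_bmul_r s (e j))) Tm_sym // -(pair_lin _ _ (lin_bmul_r p (e i))).
  rewrite !c1m c1p c1s -(pair_lin _ _ (lin_bmul_l p (e j))) -(pair_lin _ _ (lin_bmul_r p (e i))).
  rewrite -(pair_lin _ _ (lin_bmul_l s (e i))) -(pair_lin _ _ (lin_bmul_r s (e j))) cross1 cross2.
  rewrite (D1f HA) (D3f HA); kring.
Qed.

Theorem main_thm (s p : sconst K n) (r : ten2 K n) :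
  dendriform s p -> symmetric_tensor r -> D_equation s p r ->
  dendriform (dual_succ s p r) (dual_prec s p r) /\
  D_bialgebra s p (dual_succ s p r) (dual_prec s p r).
Proof.
move=> HA Hr HD; have HB := dual_dend HA Hr HD; split=> //.
by split => //; [exact: halfA | exact: halfB].
Qed.

End Work.

Theorem corollary4p4p4 (K : fieldType) (n : nat) (s p : sconst K n) (r : ten2 K n) :
  dendriform s p -> symmetric_tensor r -> D_equation s p r ->
  dendriform (dual_succ s p r) (dual_prec s p r) /\
  D_bialgebra s p (dual_succ s p r) (dual_prec s p r).
Proof. exact: main_thm. Qed.
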